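(* Let $G$ be an interval graph. If $G$ contains the forbidden pattern $\mathtt{F}$ as an induced subgraph (an induced path $P$ on $k$ vertices whose open neighbourhood contains an independent set of at least $k+3$ vertices), then $G$ is not an exactly hittable interval graph.
   Context: An interval graph is the intersection graph of a finite family of intervals on a line. An interval family (interval hypergraph) is exactly hittable if there is a set $S$ of points with $|S\cap I|=1$ for every interval $I$ of the family. An exactly hittable interval graph is an interval graph having an interval representation that is exactly hittable. The open neighbourhood of a path $P$ is the set of vertices not on $P$ adjacent to some vertex of $P$. *)

(* Defs.v *)
From mathcomp Require Import all_boot.
From Stdlib Require Import Reals.
Set Implicit Arguments. Unset Strict Implicit. Unset Printing Implicit Defensive.

Local Open Scope R_scope.

(* A finite simple graph: vertex type T : finType, adjacency e : rel T,
   assumed symmetric and irreflexive (hypotheses of the theorem). *)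

Definition interval_rep (T : finType) (e : rel T) (lo hi : T -> R) : Prop :=
  (forall v, lo v <= hi v) /\
  (forall u v, u != v ->
     (e u v <-> exists x, lo u <= x <= hi u /\ lo v <= x <= hi v)).

Definition interval_graph (T : finType) (e : rel T) : Prop :=
  exists lo hi : T -> R, interval_rep e lo hi.

Definition exactly_hittable (T : finType) (lo hi : T -> R) : Prop :=
  exists S : R -> Prop,
    forall v, exists! x, S x /\ lo v <= x <= hi v.

Definition exactly_hittable_interval_graph (T : finType) (e : rel T) : Prop :=
  exists lo hi : T -> R, interval_rep e lo hi /\ exactly_hittable lo hi.

Local Open Scope nat_scope.

Definition induced_path (T : finType) (e : rel T) (k : nat) (P : 'I_k -> T) : Prop :=
  injective P /\
  forall i j : 'I_k, e (P i) (P j) <-> (val i == (val j).+1) || (val j == (val i).+1).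

Definition open_nbhd (T : finType) (e : rel T) (k : nat) (P : 'I_k -> T) : {set T} :=
  [set x | (x \notin [set P i | i : 'I_k]) && [exists i : 'I_k, e x (P i)]].

Definition independent (T : finType) (e : rel T) (I : {set T}) : Prop :=
  forall u v, u \in I -> v \in I -> ~~ e u v.

Definition contains_F (T : finType) (e : rel T) : Prop :=
  exists (k : nat) (P : 'I_k -> T) (I : {set T}),
    induced_path e P /\ I \subset open_nbhd e P /\ independent e I /\ k + 3 <= #|I|.

(* Main.v *)
Require Import Defs.
From mathcomp Require Import all_boot.
From mathcomp Require Import zify.
From Stdlib Require Import Reals Lra ClassicalEpsilon.
Set Implicit Arguments. Unset Strict Implicit. Unset Printing Implicit Defensive.

Definition rleb (x y : R) : bool := if Rle_dec x y then true else false.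

Lemma rlebP x y : reflect (x <= y)%R (rleb x y).
Proof. by rewrite /rleb; case: Rle_dec => H; constructor. Qed.

Lemma exists_min (A : finType) (f : A -> R) (a : A) :
  exists i, forall j, (f i <= f j)%R.
Proof.
have: forall s : seq A, exists i, forall j, j \in s -> (f i <= f j)%R.
  elim=> [|x s [i IH]]; first by exists a.
  case: (Rle_dec (f x) (f i)) => H.
  - exists x => j; rewrite inE => /orP [/eqP -> | /IH]; lra.
  - exists i => j; rewrite inE => /orP [/eqP -> | /IH]; lra.
case/(_ (enum A)) => i H; exists i => j; apply: H; by rewrite mem_enum.
Qed.

Lemma exists_max (A : finType) (f : A -> R) (a : A) :
  exists i, forall j, (f j <= f i)%R.
Proof.
case: (exists_min (fun i => - f i)%R a) => i H; exists i => j; have := H j; lra.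
Qed.

Theorem lemma13 (T : finType) (e : rel T)
  (e_sym : symmetric e) (e_irr : irreflexive e)
  (hG : interval_graph e) (hF : contains_F e) :
  ~ exactly_hittable_interval_graph e.
Proof.
move=> [lo [hi [[Hlohi Hrep] [S HS]]]].
case: hF => k [P [I [[Pinj Padj] [HIsub [Hind HIcard]]]]].
have Hh: forall v, {x | S x /\ (lo v <= x <= hi v)%R}.
  move=> v; apply: constructive_indefinite_description.
  case: (HS v) => x [Hx _]; by exists x.
pose h := fun v => proj1_sig (Hh v).
have hP : forall v, S (h v) /\ (lo v <= h v <= hi v)%R := fun v => proj2_sig (Hh v).
have hU : forall v x, S x -> (lo v <= x <= hi v)%R -> x = h v.
  move=> v x Sx Ix; case: (HS v) => y [_ Hy].
  have e1 := Hy x (conj Sx Ix); have e2 := Hy (h v) (hP v); congruence.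
have Hdisj: forall u v x, u \in I -> v \in I -> (lo u <= x <= hi u)%R ->
    (lo v <= x <= hi v)%R -> u = v.
  move=> u v x uI vI Hu Hv; case: (eqVneq u v) => // Huv; exfalso.
  have := Hind u v uI vI; rewrite (_ : e u v = true) //.
  apply: (proj2 (Hrep u v Huv)); by exists x.
have HN: forall v, v \in I -> (forall i, P i != v) /\ exists i, e v (P i).
  move=> v vI; have := subsetP HIsub v vI; rewrite inE => /andP [Hn /existsP [i Hi]].
  split; last by exists i.
  move=> j; apply/eqP => Hj; move: Hn; rewrite -Hj; case/negP; apply/imsetP; by exists j.
have HNi: forall v, v \in I -> exists i, (lo v <= hi (P i))%R /\ (lo (P i) <= hi v)%R.
  move=> v vI; case: (HN v vI) => Hn [i Hi]; exists i.
  have Hne : v != P i by rewrite eq_sym.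
  case: (proj1 (Hrep v (P i) Hne) Hi) => y; lra.
have: (0 < #|I|)%N by lia.
case/card_gt0P => v0 v0I.
case: (HN v0 v0I) => _ [i0 _].
destruct k as [|k']; first by case: i0.
case: (exists_min (fun i => lo (P i)) ord0) => im Him.
case: (exists_max (fun i => hi (P i)) ord0) => iM HiM.
pose m := lo (P im); pose M := hi (P iM).
have Hun: forall (j : nat), (j <= k')%N -> forall x n1 n2, (n1 <= j)%N -> (n2 <= j)%N ->
    (lo (P (inord n1)) <= x)%R -> (x <= hi (P (inord n2)))%R ->
    exists n, (n <= j)%N /\ (lo (P (inord n)) <= x <= hi (P (inord n)))%R.
  elim=> [|j IH] Hj x n1 n2 H1 H2 Hx1 Hx2.
    move: H1 H2; rewrite !leqn0 => /eqP E1 /eqP E2; subst; exists 0%N; split=> //; lra.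
  have Hadj: exists y, (lo (P (inord j)) <= y <= hi (P (inord j)))%R /\
                       (lo (P (inord j.+1)) <= y <= hi (P (inord j.+1)))%R.
    have Hne : P (inord j) != P (inord j.+1).
      apply/eqP => /Pinj /(congr1 (@nat_of_ord _)); rewrite !inordK //; lia.
    case: (proj1 (Hrep _ _ Hne) (proj2 (Padj _ _) _)).
      rewrite /= !inordK ?eqxx ?orbT //; lia.
    move=> y Hy; by exists y.
  case: Hadj => y [Hy1 Hy2].
  have Hj' : (j <= k')%N by lia.
  case: (Rle_dec (lo (P (inord j.+1))) x) => Ha; case: (Rle_dec x (hi (P (inord j.+1)))) => Hb.
  - by exists j.+1; split=> //; lra.
  -
    have Hn2 : (n2 <= j)%N.
      move: H2; rewrite leq_eqVlt => /orP [/eqP E|]; last by rewrite ltnS.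
      subst n2; lra.
    move: H1; rewrite leq_eqVlt => /orP [/eqP E|H1].
    + subst n1; case: (IH Hj' x j n2 (leqnn _) Hn2 _ Hx2); first lra.
      move=> n [Hn Hx]; exists n; split=> //; lia.
    + case: (IH Hj' x n1 n2 H1 Hn2 Hx1 Hx2) => n [Hn Hx]; exists n; split=> //; lia.
  - have Hn1 : (n1 <= j)%N.
      move: H1; rewrite leq_eqVlt => /orP [/eqP E|]; last by rewrite ltnS.
      subst n1; lra.
    move: H2; rewrite leq_eqVlt => /orP [/eqP E|H2].
    + subst n2; case: (IH Hj' x n1 j Hn1 (leqnn _) Hx1); first lra.
      move=> n [Hn Hx]; exists n; split=> //; lia.
    + case: (IH Hj' x n1 n2 Hn1 H2 Hx1 Hx2) => n [Hn Hx]; exists n; split=> //; lia.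
  - lra.
have Hcov: forall x, (m <= x <= M)%R -> exists i : 'I_k'.+1, (lo (P i) <= x <= hi (P i))%R.
  move=> x Hx.
  have := Hun k' (leqnn _) x im iM (ltn_ord im) (ltn_ord iM).
  rewrite !inord_val /m /M in Hx *.
  case=> [||n [_ Hn]]; try lra; by exists (inord n).
pose J := [set v in I | rleb m (lo v) && rleb (hi v) M].
pose B1 := [set v in I | ~~ rleb m (lo v)].
pose B2 := [set v in I | ~~ rleb (hi v) M].
have HB1 : (#|B1| <= 1)%N.
  apply/card_le1_eqP => u v; rewrite !inE => /andP [uI /rlebP Hu] /andP [vI /rlebP Hv].
  apply: (Hdisj v u m vI uI).
  - case: (HNi v vI) => i Hi; have := Him i; rewrite /m in Hv *; lra.
  - case: (HNi u uI) => i Hi; have := Him i; rewrite /m in Hu *; lra.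
have HB2 : (#|B2| <= 1)%N.
  apply/card_le1_eqP => u v; rewrite !inE => /andP [uI /rlebP Hu] /andP [vI /rlebP Hv].
  apply: (Hdisj v u M vI uI).
  - case: (HNi v vI) => i Hi; have := HiM i; rewrite /M in Hv *; lra.
  - case: (HNi u uI) => i Hi; have := HiM i; rewrite /M in Hu *; lra.
have HIJ : (#|I| <= #|J| + #|B1| + #|B2|)%N.
  apply: (leq_trans (n := #|J :|: B1 :|: B2|)).
    apply: subset_leq_card; apply/subsetP => v vI; rewrite !inE vI /=.
    by case: (rleb m (lo v)); case: (rleb (hi v) M).
  apply: (leq_trans (leq_card_setU _ _)); rewrite leq_add2r.
  exact: (leq_card_setU _ _).
have Hf: forall v, exists i : 'I_k'.+1, v \in J -> (lo (P i) <= h v <= hi (P i))%R.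
  move=> v; case: (boolP (v \in J)) => vJ; last by exists ord0.
  move: vJ; rewrite inE => /andP [vI /andP [/rlebP H1 /rlebP H2]].
  have := hP v; case=> _ Hv.
  case: (Hcov (h v)); first lra.
  move=> i Hi; by exists i.
pose f := fun v => proj1_sig (constructive_indefinite_description _ (Hf v)).
have fP : forall v, v \in J -> (lo (P (f v)) <= h v <= hi (P (f v)))%R :=
  fun v => proj2_sig (constructive_indefinite_description _ (Hf v)).
have finj : {in J &, injective f}.
  move=> u v uJ vJ Huv.
  have Eu := hU _ _ (proj1 (hP u)) (fP u uJ).
  have Ev := hU _ _ (proj1 (hP v)) (fP v vJ).
  rewrite Huv in Eu.
  have uI : u \in I by move: uJ; rewrite inE => /andP [].
  have vI : v \in I by move: vJ; rewrite inE => /andP [].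
  apply: (Hdisj u v (h u) uI vI (proj2 (hP u))).
  rewrite Eu -Ev; exact: (proj2 (hP v)).
have HJ : (#|J| <= k'.+1)%N.
  rewrite -(card_in_imset finj).
  by apply: (leq_trans (max_card _)); rewrite card_ord.
lia.
Qed.
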